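(* An endomorphism $\varphi$ of a periodic abelian group $A$ is inertial (resp. left-inertial) if and only if its restriction to every primary component $A_p$ of $A$ is inertial (resp. left-inertial) and it acts as a multiplication (resp. an invertible multiplication) on all but finitely many of the primary components $A_p$.
   Context: Abelian groups are written additively. An endomorphism $\varphi$ of $A$ is inertial if $(\varphi(X)+X)/X$ is finite for every subgroup $X\le A$, and left-inertial if $X/(X\cap\varphi(X))$ is finite for every $X\le A$. A multiplication of an abelian $p$-group is the natural action of a $p$-adic integer; it is invertible if it is bijective. Primary components are invariant under every endomorphism. *)

(* Defs.v *)
From HB Require Import structures.
From mathcomp Require Import all_boot all_algebra.
Set Implicit Arguments. Unset Strict Implicit. Unset Printing Implicit Defensive.
Import GRing.Theory.
Local Open Scope ring_scope.

Definition is_subgroup (A : zmodType) (X : A -> Prop) : Prop :=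
  X 0 /\ (forall x y, X x -> X y -> X (x - y)).

(* For H <= K, "K/H is finite": finitely many cosets of H cover K. *)
Definition fin_quot (A : zmodType) (K H : A -> Prop) : Prop :=
  exists s : seq A, forall k, K k -> exists2 y, y \in s & H (k - y).

Definition img (A : zmodType) (f : A -> A) (X : A -> Prop) : A -> Prop :=
  fun b => exists2 a, X a & b = f a.

Definition sumg (A : zmodType) (X Y : A -> Prop) : A -> Prop :=
  fun b => exists a, exists c, [/\ X a, Y c & b = a + c].

Definition capg (A : zmodType) (X Y : A -> Prop) : A -> Prop :=
  fun b => X b /\ Y b.

Definition inertial_on (A : zmodType) (B : A -> Prop) (f : A -> A) : Prop :=
  forall X : A -> Prop, is_subgroup X -> (forall x, X x -> B x) ->
    fin_quot (sumg (img f X) X) X.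

Definition left_inertial_on (A : zmodType) (B : A -> Prop) (f : A -> A) : Prop :=
  forall X : A -> Prop, is_subgroup X -> (forall x, X x -> B x) ->
    fin_quot X (capg X (img f X)).

Definition whole (A : zmodType) : A -> Prop := fun _ => True.

Definition inertial (A : zmodType) (f : A -> A) := inertial_on (@whole A) f.
Definition left_inertial (A : zmodType) (f : A -> A) :=
  left_inertial_on (@whole A) f.

Definition periodic (A : zmodType) : Prop :=
  forall a : A, exists2 n : nat, (0 < n)%N & a *+ n = 0.

Definition primary (A : zmodType) (p : nat) : A -> Prop :=
  fun a => exists k : nat, a *+ (p ^ k) = 0.

(* p-adic integers as compatible sequences of residues mod p^k. *)
Definition padic_seq (p : nat) (c : nat -> nat) : Prop :=
  forall k : nat, c k.+1 = c k %[mod p ^ k].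

Definition acts_as_padic (A : zmodType) (p : nat) (c : nat -> nat)
    (f : A -> A) : Prop :=
  forall (a : A) (k : nat), a *+ (p ^ k) = 0 -> f a = a *+ c k.

Definition mult_on (A : zmodType) (p : nat) (f : A -> A) : Prop :=
  exists c, padic_seq p c /\ acts_as_padic p c f.

Definition inv_mult_on (A : zmodType) (p : nat) (f : A -> A) : Prop :=
  exists c, [/\ padic_seq p c, acts_as_padic p c f,
    (forall a b, primary p a -> primary p b -> f a = f b -> a = b) &
    (forall b, primary p b -> exists2 a, primary p a & f a = b)].

Definition cofinitely_many_primes (P : nat -> Prop) : Prop :=
  exists s : seq nat, forall p, prime p -> p \notin s -> P p.

(* Main.v *)
Require Import Defs.
From HB Require Import structures.
From mathcomp Require Import all_boot all_algebra.
From mathcomp Require Import ring zify.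
From Stdlib Require Import Classical ClassicalEpsilon.
Set Implicit Arguments. Unset Strict Implicit. Unset Printing Implicit Defensive.
Import GRing.Theory Num.Theory.
Local Open Scope ring_scope.
Lemma mulz_killed (A : zmodType) (x : A) (N : nat) (z : int) :
  x *+ N = 0 -> (N%:Z %| z)%Z -> x *~ z = 0.
Proof.
move=> hN /dvdzP [q ->]; rewrite mulrC mulrzA -pmulrn hN; exact: mul0rz.
Qed.

Lemma mulz_cong (A : zmodType) (x : A) (N : nat) (z1 z2 : int) :
  x *+ N = 0 -> (N%:Z %| z1 - z2)%Z -> x *~ z1 = x *~ z2.
Proof.
move=> hN hd; apply/eqP; rewrite -subr_eq0 -mulrzBr; apply/eqP.
exact: mulz_killed hd.
Qed.

Lemma gcd_killed (A : zmodType) (x : A) (a b : int) :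
  x *~ a = 0 -> x *~ b = 0 -> x *~ (gcdz a b) = 0.
Proof.
move=> ha hb; case: (Bezoutz a b) => u [v <-].
by rewrite mulrzDr (mulrC u) (mulrC v) !mulrzA ha hb !mul0rz addr0.
Qed.

Lemma ord_dvd (A : zmodType) (p n : nat) (x : A) (z : int) : prime p ->
  x *+ p ^ n = 0 -> x *+ p ^ n.-1 != 0 -> x *~ z = 0 -> ((p ^ n)%:Z %| z)%Z.
Proof.
move=> pp hn hn1 hz.
have hg := gcd_killed hz (etrans (esym (pmulrn x (p ^ n))) hn).
have : (gcdn `|z| (p ^ n) %| p ^ n)%N by exact: dvdn_gcdr.
case/(dvdn_pfactor _ _ pp) => i ile hi.
have : i = n.
  apply/eqP; rewrite eqn_leq ile /= leqNgt; apply/negP => lt.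
  move: hn1.
  have -> : (p ^ n.-1 = p ^ i * p ^ (n.-1 - i))%N.
    by rewrite -expnD subnKC // -ltnS prednK // (leq_ltn_trans _ lt).
  rewrite mulrnA.
  have -> : x *+ (p ^ i) = 0.
    by rewrite -hi pmulrn; move: hg; rewrite /gcdz.
  by rewrite mul0rn eqxx.
move=> ein; rewrite dvdzE /=; subst i; rewrite -hi; exact: dvdn_gcdl.
Qed.

Lemma sub0 (A : zmodType) (X : A -> Prop) : is_subgroup X -> X 0.
Proof. by case. Qed.
Lemma subN (A : zmodType) (X : A -> Prop) x : is_subgroup X -> X x -> X (- x).
Proof. by case=> h0 hs hx; rewrite -sub0r; apply: hs. Qed.
Lemma subD (A : zmodType) (X : A -> Prop) x y : is_subgroup X -> X x -> X y -> X (x + y).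
Proof. by move=> hX hx hy; rewrite -[y]opprK; apply: hX.2 => //; apply: subN. Qed.
Lemma subB (A : zmodType) (X : A -> Prop) x y : is_subgroup X -> X x -> X y -> X (x - y).
Proof. by move=> hX; apply: hX.2. Qed.
Lemma subMn (A : zmodType) (X : A -> Prop) x n : is_subgroup X -> X x -> X (x *+ n).
Proof.
move=> hX hx; elim: n => [|n IH]; first by rewrite mulr0n; apply: sub0 hX.
by rewrite mulrS; apply: subD.
Qed.
Lemma subMz (A : zmodType) (X : A -> Prop) x z : is_subgroup X -> X x -> X (x *~ z).
Proof.
move=> hX hx; case: z => n; first by rewrite -pmulrn; apply: subMn.
by rewrite NegzE mulrNz; apply: subN => //; rewrite -pmulrn; apply: subMn.
Qed.

Lemma img_sub (A : zmodType) (f : {additive A -> A}) (X : A -> Prop) :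
  is_subgroup X -> is_subgroup (img f X).
Proof.
move=> hX; split; first by exists 0; [apply: sub0 hX | rewrite raddf0].
move=> _ _ [a ha ->] [b hb ->]; exists (a - b); first exact: subB.
by rewrite raddfB.
Qed.

Lemma cap_sub (A : zmodType) (X Y : A -> Prop) :
  is_subgroup X -> is_subgroup Y -> is_subgroup (capg X Y).
Proof.
move=> hX hY; split; first by split; apply: sub0.
by move=> x y [h1 h2] [h3 h4]; split; apply: subB.
Qed.

Lemma split_coprime (A : zmodType) (x : A) (a b : nat) : coprime a b ->
  x *+ (a * b) = 0 -> exists z1 z2 : int,
   [/\ x = x *~ z1 + x *~ z2, (x *~ z1) *+ a = 0 & (x *~ z2) *+ b = 0].
Proof.
move=> cab hx; case: (Bezoutz a b) => u [v huv].
have g1 : gcdz a b = 1 by rewrite /gcdz /=; move/eqP: cab => ->.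
exists (v * b), (u * a); split.
- by rewrite -mulrzDr addrC huv g1.
- rewrite pmulrn -mulrzA; apply: (mulz_killed hx).
  by apply/dvdzP; exists v; rewrite PoszM; ring.
- rewrite pmulrn -mulrzA; apply: (mulz_killed hx).
  by apply/dvdzP; exists u; rewrite PoszM; ring.
Qed.

Lemma good_ind (A : zmodType) (P : A -> Prop) (good : nat -> Prop) :
  P 0 ->
  (forall x z1 z2 a b, coprime a b -> (x *~ z1) *+ a = 0 -> (x *~ z2) *+ b = 0 ->
     x = x *~ z1 + x *~ z2 -> P (x *~ z1) -> P (x *~ z2) -> P x) ->
  (forall p x, prime p -> good p -> primary p x -> P x) ->
  forall n x, (0 < n)%N -> (forall q, prime q -> (q %| n)%N -> good q) ->
    x *+ n = 0 -> P x.
Proof.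
move=> P0 Pcl Pbase n; elim/ltn_ind: n => n IH x n0 hq hx.
case: (ltnP 1 n) => n1; last first.
  move: hx; have -> : n = 1%N by apply/eqP; rewrite eqn_leq n1 n0.
  by rewrite mulr1n => ->.
set p := pdiv n.
have pp : prime p by exact: pdiv_prime.
have pn : (p %| n)%N by exact: pdiv_dvd.
have cab := coprime_partC p n n.
have eab := partnC p n0.
have hx' : x *+ (n`_p * n`_p^') = 0 by rewrite eab.
case: (split_coprime cab hx') => z1 [z2 [ex h1 h2]].
apply: (Pcl _ _ _ _ _ cab h1 h2 ex).
  apply: (Pbase p) => //; first exact: hq.
  by exists (logn p n); rewrite -p_part.
have a1 : (1 < n`_p)%N.
  by rewrite p_part_gt1 /= mem_primes pp n0 pn.
apply: (IH _ _ _ _ _ h2).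
- by rewrite -{2}eab ltn_Pmull // part_gt0.
- exact: part_gt0.
- by move=> q qp qd; apply: hq => //; apply: dvdn_trans qd (dvdn_part _ _).
Qed.

Lemma fin_decomp (A : zmodType) (F : {additive A -> A}) (X H : A -> Prop)
    (good : nat -> Prop) :
  is_subgroup X -> is_subgroup H ->
  (forall p x, prime p -> good p -> primary p x -> X x -> H (F x)) ->
  (forall p, prime p -> exists t : seq A, forall x, primary p x -> X x ->
      exists2 y, y \in t & H (F x - y)) ->
  forall s : seq nat, exists s0 : seq A, forall (x : A) (n : nat), (0 < n)%N ->
    x *+ n = 0 -> X x ->
    (forall q, prime q -> (q %| n)%N -> q \in s \/ good q) ->
    exists2 y, y \in s0 & H (F x - y).
Proof.
move=> hX hH hgood hbad; elim=> [|p s IH].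
  exists [:: 0] => x n n0 hx Xx hq; exists 0; rewrite ?inE // subr0.
  pose P := fun y : A => X y -> H (F y).
  have : P x; last by apply.
  apply: (good_ind (good := good) _ _ _ n0 _ hx).
  - by move=> _; rewrite raddf0; apply: sub0 hH.
  - move=> y z1 z2 a b _ _ _ ey h1 h2 Xy.
    rewrite ey raddfD; apply: subD => //; [apply: h1 | apply: h2];
      exact: subMz.
  - by move=> q y qp gq py Xy; apply: hgood qp gq py Xy.
  - by move=> q qp qd; case: (hq q qp qd).
case: IH => s2 hs2.
have [t ht] : exists t : seq A, forall x m, x *+ m`_p = 0 -> X x ->
      exists2 y, y \in 0 :: t & H (F x - y).
  case: (classic (prime p)) => pp.
    case: (hbad p pp) => t ht; exists t => x m hm Xx.
    have px : primary p x by exists (logn p m); rewrite -p_part.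
    by case: (ht x px Xx) => y yt hy; exists y; rewrite // inE yt orbT.
  exists [::] => x m hm Xx; exists 0; rewrite ?inE // subr0.
  move: hm; rewrite p_part /logn (negbTE (introN idP pp)) expn0 mulr1n => ->.
  by rewrite raddf0; apply: sub0 hH.
exists [seq y1 + y2 | y1 <- 0 :: t, y2 <- s2] => x n n0 hx Xx hq.
have cab := coprime_partC p n n.
have eab := partnC p n0.
have hx' : x *+ (n`_p * n`_p^') = 0 by rewrite eab.
case: (split_coprime cab hx') => z1 [z2 [ex h1 h2]].
case: (ht _ _ h1 (subMz z1 hX Xx)) => y1 y1t hy1.
have b0 : (0 < n`_p^')%N by exact: part_gt0.
case: (hs2 _ _ b0 h2 (subMz z2 hX Xx)).
  move=> q qp qd.
  have qn : (q %| n)%N by apply: dvdn_trans qd (dvdn_part _ _).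
  case: (hq q qp qn) => [|gq]; last by right.
  rewrite inE => /orP [/eqP eq|]; last by left.
  exfalso; subst q.
  have : p \in (p : nat_pred)^' .
    apply: (pnatPpi (part_pnat _ n)).
    by rewrite /= mem_primes qp b0 qd.
  by rewrite !inE eqxx.
move=> y2 y2s hy2; exists (y1 + y2); first exact: allpairs_f.
rewrite {1}ex raddfD.
have -> : F (x *~ z1) + F (x *~ z2) - (y1 + y2) = (F (x *~ z1) - y1) + (F (x *~ z2) - y2).
  by rewrite opprD addrACA.
exact: subD.
Qed.

Lemma primary_sub (A : zmodType) p : is_subgroup (@primary A p).
Proof.
split; first by exists 0%N; rewrite mul0rn.
move=> x y [k hk] [l hl]; exists (k + l)%N.
by rewrite mulrnBl expnD mulrnA hk mul0rn mulnC mulrnA hl mul0rn subr0.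
Qed.


Lemma coprime_inv (A : zmodType) (x : A) (c N : nat) : coprime c N ->
  x *+ N = 0 -> exists u : int, (x *+ c) *~ u = x.
Proof.
move=> cop hx; case: (Bezoutz c N) => u [v huv].
have g1 : gcdz c N = 1 by rewrite /gcdz /=; move/eqP: cop => ->.
exists u; rewrite pmulrn -mulrzA.
have -> : (c%:Z * u) = 1 - v * N by rewrite -g1 -huv mulrC addrK.
rewrite mulrzBr mulrC mulrzA -pmulrn hx mul0rz subr0; exact: mulr1z.
Qed.

Lemma ex_ord (A : zmodType) p (a : A) : primary p a -> a != 0 ->
  exists r, [/\ (0 < r)%N, a *+ p ^ r = 0 & a *+ p ^ r.-1 != 0].
Proof.
move=> [k hk] a0.
have ex : exists r, a *+ p ^ r == 0 by exists k; apply/eqP.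
case: (ex_minnP ex) => r /eqP hr hmin.
have r0 : (0 < r)%N.
  by rewrite lt0n; apply/negP => /eqP r0; move: hr; rewrite r0 expn0 mulr1n; apply/eqP.
exists r; split => //; apply/negP => /eqP h.
by have := hmin _ (introT eqP h); rewrite leqNgt prednK // leqnn.
Qed.

Lemma inv_mult_pre (A : zmodType) (phi : {additive A -> A}) p x :
  prime p -> inv_mult_on p phi -> primary p x -> exists z : int, phi (x *~ z) = x.
Proof.
move=> pp [c [cpad cact cinj csurj]] px.
case: (csurj x px) => a pa <-.
case: (eqVneq a 0) => [->|a0]; first by exists 0; rewrite mulr0z !raddf0.
case: (ex_ord pa a0) => r [r0 hr hr1].
have hx := cact a r hr.
case: (boolP (p %| c r)%N) => dv.
  exfalso; move: hr1; apply/negP; rewrite negbK; apply/eqP.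
  have pa' : primary p (a *+ p ^ r.-1) by exists r; rewrite -mulrnA mulnC mulrnA hr mul0rn.
  apply: cinj => //; first by exists 0%N; rewrite mulr1n.
  rewrite raddf0 (cact _ r); last by rewrite -mulrnA mulnC mulrnA hr mul0rn.
  rewrite -mulrnA; apply/eqP; rewrite pmulrn; apply/eqP; apply: (mulz_killed hr).
  case/dvdnP: dv => q ->; apply/dvdzP; exists q%:Z.
  rewrite -(prednK r0) expnS /= !PoszM; ring.
have cop : coprime (c r) (p ^ r) by rewrite coprime_pexpr // coprime_sym prime_coprime.
case: (coprime_inv cop hr) => u hu; exists u.
by rewrite hx hu hx.
Qed.

Lemma inertial_back (A : zmodType) (hA : periodic A) (phi : {additive A -> A}) :
  (forall p, prime p -> inertial_on (primary p) phi) ->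
  cofinitely_many_primes (fun p => mult_on p phi) -> inertial phi.
Proof.
move=> hin [s hs] X hX _.
have hg : forall p x, prime p -> mult_on p phi -> primary p x -> X x -> X (phi x).
  move=> p x pp [c [_ hc]] [k hk] Xx; rewrite (hc x k hk); exact: subMn.
have hb : forall p, prime p -> exists t : seq A, forall x, primary p x -> X x ->
      exists2 y, y \in t & X (phi x - y).
  move=> p pp.
  have hXp : is_subgroup (capg X (primary p)) by apply: cap_sub => //; apply: primary_sub.
  case: (hin p pp _ hXp (fun x h => h.2)) => t ht; exists t => x px Xx.
  case: (ht (phi x + 0)).
    by exists (phi x), 0; split => //; [exists x | apply: sub0 hXp].
  by move=> y yt [hy _]; exists y => //; rewrite addr0 in hy.
have [s0 hs0] := @fin_decomp A phi X X (fun p => mult_on p phi) hX hX hg hb s.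
exists s0 => _ [_ [x' [[x Xx ->] Xx' ->]]].
case: (hA x) => n n0 hn.
case: (hs0 x n n0 hn Xx).
  move=> q qp _; case: (boolP (q \in s)) => qs; first by left.
  by right; apply: hs.
move=> y ys hy; exists y => //.
by rewrite addrAC; apply: subD.
Qed.

Lemma left_inertial_back (A : zmodType) (hA : periodic A) (phi : {additive A -> A}) :
  (forall p, prime p -> left_inertial_on (primary p) phi) ->
  cofinitely_many_primes (fun p => inv_mult_on p phi) -> left_inertial phi.
Proof.
move=> hin [s hs] X hX _.
have hH : is_subgroup (capg X (img phi X)) by apply: cap_sub => //; apply: img_sub.
have hg : forall p x, prime p -> inv_mult_on p phi -> primary p x -> X x ->
    capg X (img phi X) (idfun x).
  move=> p x pp hm px Xx; split => //.
  case: (inv_mult_pre pp hm px) => z hz; exists (x *~ z) => //; exact: subMz.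
have hb : forall p, prime p -> exists t : seq A, forall x, primary p x -> X x ->
      exists2 y, y \in t & capg X (img phi X) (idfun x - y).
  move=> p pp.
  have hXp : is_subgroup (capg X (primary p)) by apply: cap_sub => //; apply: primary_sub.
  case: (hin p pp _ hXp (fun x h => h.2)) => t ht; exists t => x px Xx.
  case: (ht x) => // y yt [[hy _] [a [Xa _] ea]]; exists y => //.
  by split => //; exists a.
have [s0 hs0] := @fin_decomp A idfun X _ (fun p => inv_mult_on p phi) hX hH hg hb s.
exists s0 => x Xx.
case: (hA x) => n n0 hn.
case: (hs0 x n n0 hn Xx).
  move=> q qp _; case: (boolP (q \in s)) => qs; first by left.
  by right; apply: hs.
by move=> y ys hy; exists y.
Qed.

Lemma coprime_invz (A : zmodType) (x : A) (c : int) (N : nat) : coprimez c N ->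
  x *+ N = 0 -> exists u : int, (x *~ c) *~ u = x.
Proof.
move=> cop hx; case: (Bezoutz c N) => u [v huv].
have g1 : gcdz c N = 1 by move/eqP: cop => ->.
exists u; rewrite -mulrzA.
have -> : (c * u) = 1 - v * N by rewrite -g1 -huv mulrC addrK.
rewrite mulrzBr mulrC mulrzA -pmulrn hx mul0rz subr0; exact: mulr1z.
Qed.

Lemma to_nat (A : zmodType) (x : A) (N : nat) (z : int) : (0 < N)%N ->
  x *+ N = 0 -> exists m : nat, x *~ z = x *+ m.
Proof.
move=> N0 hx; exists `|(z %% N)%Z|%N.
have N0' : N%:Z != 0 by rewrite eqz_nat -lt0n.
rewrite pmulrn gez0_abs ?modz_ge0 //.
apply: (mulz_cong hx); apply/dvdzP; exists (z %/ N)%Z.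
by rewrite {1}(divz_eq z N) addrK.
Qed.

Lemma cyc_step (A : zmodType) (g : {additive A -> A}) p l (y : A) : prime p ->
  (forall x, primary p x -> exists z : int, g x = x *~ z) ->
  y *+ p ^ l.+1 = 0 -> y *+ p ^ l != 0 -> g (y *+ p) = 0 ->
  exists t : int, g y = (y *+ p ^ l) *~ t.
Proof.
move=> pp hg hy hy1 hgp.
case: (hg y) => [|t ht]; first by exists l.+1.
have : y *~ (t * p%:Z) = 0 by rewrite mulrzA -ht -pmulrn -raddfMn.
move/(ord_dvd pp hy); rewrite /= hy1 => /(_ isT).
rewrite expnSr PoszM dvdz_mul2r; last by rewrite eqz_nat -lt0n prime_gt0.
case/dvdzP => q eq; exists q; by rewrite ht eq pmulrn -mulrzA mulrC.
Qed.

Lemma lemK (A : zmodType) (g : {additive A -> A}) p j (a : A) : prime p ->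
  (forall x, primary p x -> exists z : int, g x = x *~ z) ->
  a *+ p ^ j = 0 -> a *+ p ^ j.-1 != 0 -> g a = 0 ->
  forall l, (l <= j)%N -> forall b : A, b *+ p ^ l = 0 -> g b = 0.
Proof.
move=> pp hg ha ha1 ga.
have j0 : (0 < j)%N.
  by case: j ha ha1 => // ha ha1; rewrite ha eqxx in ha1.
have gam : forall k, g (a *+ k) = 0 by move=> k; rewrite raddfMn ga mul0rn.
have gaz : forall z, g (a *~ z) = 0 by move=> z; rewrite raddfMz ga mul0rz.
elim=> [|l IH] hl b hb.
  by move: hb; rewrite expn0 mulr1n => ->; rewrite raddf0.
have hl' : (l <= j)%N by apply: ltnW.
case: (eqVneq (b *+ p ^ l) 0) => w0; first exact: IH.
have gbp : g (b *+ p) = 0 by apply: IH => //; rewrite -mulrnA -expnS.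
case: (cyc_step pp hg hb w0 gbp) => t' ht'.
have wp : (b *+ p ^ l) *+ p = 0 by rewrite -mulrnA -expnSr hb.
have vp : (a *+ p ^ j.-1) *+ p = 0 by rewrite -mulrnA -expnSr prednK // ha.
have eQ : (p ^ (j - l.+1) * p ^ l = p ^ j.-1)%N.
  by rewrite -expnD; congr (expn p _); lia.
set w := b *+ p ^ l in w0 ht' wp.
set v := a *+ p ^ j.-1 in vp eQ.
pose c := a *+ p ^ (j - l.+1) + b.
have hc : c *+ p ^ l.+1 = 0.
  by rewrite /c mulrnDl -mulrnA -expnD subnK // ha hb addr0.
have hcl : c *+ p ^ l = v + w.
  by rewrite /c mulrnDl -mulrnA eQ.
have gc : g c = g b by rewrite /c raddfD gam add0r.
case: (eqVneq (c *+ p ^ l) 0) => c0.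
  by rewrite -gc; apply: IH.
have gcp : g (c *+ p) = 0 by apply: IH => //; rewrite -mulrnA -expnS.
case: (cyc_step pp hg hc c0 gcp) => r hr.
rewrite hcl gc ht' in hr.
have hwr : w *~ (t' - r) = v *~ r by rewrite mulrzBr hr mulrzDl addrK.
case: (classic (exists e : int, w = v *~ e)) => [[e he]|ne].
  have : g (b - a *~ (e * (p ^ (j - l.+1))%:Z)) = 0.
    apply: IH => //.
    rewrite mulrnBl -/w he /v !pmulrn -!mulrzA; apply/eqP; rewrite subr_eq0; apply/eqP.
    by congr (a *~ _); rewrite -eQ PoszM; ring.
  by rewrite raddfB gaz subr0.
case: (boolP ((p%:Z %| t' - r)%Z)) => dv.
  have wz : w *~ (t' - r) = 0 by apply: (mulz_killed wp).
  have vr : v *~ r = 0 by rewrite -hwr.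
  have pr : ((p ^ 1)%:Z %| r)%Z.
    by apply: (ord_dvd pp _ _ vr); rewrite ?expn1 ?expn0 ?mulr1n.
  rewrite expn1 in pr.
  have wr : w *~ r = 0 by apply: (mulz_killed wp).
  by rewrite ht' -[t'](subrK r) mulrzDr wz wr addr0.
exfalso; apply: ne.
have cop : coprimez (t' - r) p.
  by rewrite coprimezE coprime_sym prime_coprime.
case: (coprime_invz cop wp) => u hu.
by exists (r * u); rewrite -hu hwr mulrzA.
Qed.

Definition subm_fun (A : zmodType) (f : {additive A -> A}) (m : nat) : A -> A :=
  fun x => f x - x *+ m.
Lemma subm_is_zmod (A : zmodType) (f : {additive A -> A}) (m : nat) :
  zmod_morphism (subm_fun f m).
Proof. move=> x y; rewrite /subm_fun raddfB mulrnBl !opprB addrACA [in RHS]addrACA; congr (_ + _); exact: addrC. Qed.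
HB.instance Definition _ (A : zmodType) (f : {additive A -> A}) (m : nat) :=
  GRing.isZmodMorphism.Build A A (subm_fun f m) (subm_is_zmod f m).


Lemma expo (A : zmodType) p : forall k, exists j, [/\ (j <= k)%N,
  (forall a : A, a *+ p ^ k = 0 -> a *+ p ^ j = 0) &
  (j = 0%N \/ exists a : A, a *+ p ^ j = 0 /\ a *+ p ^ j.-1 != 0)].
Proof.
elim=> [|k [j [jk hj hj2]]]; first by exists 0%N; split => //; left.
case: (classic (exists a : A, a *+ p ^ k.+1 = 0 /\ a *+ p ^ k != 0)) => [ex|nex].
  by exists k.+1; split => //; right.
exists j; split => //; first exact: leqW.
move=> a ha; apply: hj; apply/eqP; apply/negP => hn; apply: nex; exists a; split => //.
by apply/negP.
Qed.

Lemma levelC (A : zmodType) (phi : {additive A -> A}) p : prime p ->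
  (forall x, primary p x -> exists z : int, phi x = x *~ z) ->
  forall k, exists m : nat, forall a, a *+ p ^ k = 0 -> phi a = a *+ m.
Proof.
move=> pp hphi k; case: (expo A p k) => j [jk hj [j0|[a [ha ha1]]]].
  exists 0%N => a /hj; rewrite j0 expn0 mulr1n => ->; by rewrite raddf0 mulr0n.
case: (hphi a); first by exists j.
move=> z hz.
have pj0 : (0 < p ^ j)%N by rewrite expn_gt0 prime_gt0.
case: (to_nat z pj0 ha).
move=> m hm; exists m => b /hj hb.
pose g : {additive A -> A} := subm_fun phi m.
have gE : forall x, g x = phi x - x *+ m by [].
have hg : forall x, primary p x -> exists z : int, g x = x *~ z.
  move=> x px; case: (hphi x px) => z' hz'; exists (z' - m%:Z).
  by rewrite gE hz' mulrzBr -pmulrn.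
have ga : g a = 0 by rewrite gE hz hm subrr.
have := lemK pp hg ha ha1 ga (leqnn j) hb.
by rewrite gE => /eqP; rewrite subr_eq0 => /eqP.
Qed.

Lemma lemL (A : zmodType) (phi : {additive A -> A}) p : prime p ->
  (forall x, primary p x -> exists z : int, phi x = x *~ z) -> mult_on p phi.
Proof.
move=> pp hphi.
have hC := levelC pp hphi.
case: (classic (exists e, forall a : A, primary p a -> a *+ p ^ e = 0)) => [[e he]|nb].
  case: (hC e) => m hm; exists (fun _ => m); split => // a k hk.
  by apply: hm; apply: he; exists k.
pose c := fun k => projT1 (constructive_indefinite_description _ (hC k)).
have hc : forall k a, a *+ p ^ k = 0 -> phi a = a *+ c k.
  by move=> k; rewrite /c; case: (constructive_indefinite_description _ _).
exists c; split; last by move=> a k; apply: hc.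
move=> k.
case: (classic (exists a : A, primary p a /\ a *+ p ^ k != 0)) => [[a [pa ak]]|nn]; last first.
  exfalso; apply: nb; exists k => a pa; case: (eqVneq (a *+ p ^ k) 0) => // hn.
  by exfalso; apply: nn; exists a.
have a0 : a != 0 by apply: contraNneq ak => ->; rewrite mul0rn.
case: (ex_ord pa a0) => r [r0 hr hr1].
have kr : (k < r)%N.
  rewrite ltnNge; apply/negP => rk; move/eqP: ak; apply.
  by rewrite -(subnK rk) expnD mulnC mulrnA hr mul0rn.
case: k kr ak => [|k] kr ak; first by rewrite !modn1.
set b := a *+ p ^ (r - k.+1).
have hb : b *+ p ^ k.+1 = 0 by rewrite /b -mulrnA -expnD subnK // ltnW.
have hb1 : b *+ p ^ k.+1.-1 != 0.
  rewrite /b -mulrnA -expnD /=.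
  have -> : (r - k.+1 + k = r.-1)%N by lia.
  exact: hr1.
have hb2 : b *+ p ^ k.+2 = 0 by rewrite expnS mulnC mulrnA hb mul0rn.
have e1 := hc _ _ hb; have e2 := hc _ _ hb2.
have : b *~ ((c k.+2)%:Z - (c k.+1)%:Z) = 0.
  by rewrite mulrzBr -!pmulrn -e1 -e2 subrr.
move/(ord_dvd pp hb hb1); rewrite -eqz_mod_dvd !modz_nat => /eqP [] ->.
by [].
Qed.

Lemma primary_Mz (A : zmodType) p (x : A) z : primary p x -> primary p (x *~ z).
Proof. by move=> [k hk]; exists k; rewrite pmulrn -mulrzA mulrC mulrzA -pmulrn hk mul0rz. Qed.

Lemma primary_phi (A : zmodType) (phi : {additive A -> A}) p (x : A) :
  primary p x -> primary p (phi x).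
Proof. by move=> [k hk]; exists k; rewrite -raddfMn hk raddf0. Qed.

Lemma lemLI (A : zmodType) (phi : {additive A -> A}) p : prime p ->
  (forall x, primary p x -> exists z : int, phi (x *~ z) = x) -> inv_mult_on p phi.
Proof.
move=> pp hphi.
have pow : forall x, primary p x -> exists z : int, phi x = x *~ z.
  move=> x px; case: (eqVneq x 0) => [->|x0]; first by exists 0; rewrite raddf0 mul0rz.
  case: (ex_ord px x0) => r [r0 hr hr1].
  case: (hphi x px) => k hk; rewrite raddfMz in hk.
  have hpr : phi x *+ p ^ r = 0 by rewrite -raddfMn hr raddf0.
  case: (boolP (p%:Z %| k)%Z) => dv.
    exfalso; move: hr1; rewrite -hk; apply/negP; rewrite negbK; apply/eqP.
    rewrite pmulrn -mulrzA; apply: (mulz_killed hpr).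
    case/dvdzP: dv => q ->; apply/dvdzP; exists q.
    by rewrite -(prednK r0) expnS !PoszM; ring.
  have cop : coprimez k (p ^ r)%N.
    by rewrite coprimezE /= coprime_pexpr // coprime_sym prime_coprime.
  case: (coprime_invz cop hpr) => u hu; exists u.
  by rewrite -{1}hu hk.
case: (lemL pp pow) => c [cpad cact]; exists c; split => //.
  move=> a b pa pb eab; apply/eqP; rewrite -subr_eq0; apply/eqP.
  have pab : primary p (a - b) by apply: (primary_sub A p).2.
  case: (hphi _ pab) => k hk.
  by rewrite -hk raddfMz raddfB eab subrr mul0rz.
move=> b pb; case: (hphi _ pb) => k hk; exists (b *~ k) => //.
exact: primary_Mz.
Qed.

Fixpoint pre (G : seq nat -> nat) (n : nat) : seq nat :=
  if n is m.+1 then rcons (pre G m) (G (pre G m)) else [::].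

Lemma pre_map G n : pre G n = map (fun i => G (pre G i)) (iota 0 n).
Proof.
elim: n => [|n IH] //.
have -> : pre G n.+1 = rcons (pre G n) (G (pre G n)) by [].
by rewrite -[n.+1]addn1 iotaD map_cat /= -IH cats1.
Qed.

Lemma seq_bad (A : zmodType) (Bad : nat -> A -> Prop) :
  (forall s : seq nat, exists p a, [/\ prime p, p \notin s, primary p a & Bad p a]) ->
  exists (q : nat -> nat) (a : nat -> A) (r : nat -> nat), forall i,
    [/\ prime (q i), a i *+ q i ^ r i = 0, Bad (q i) (a i) &
        forall l, (l < i)%N -> q l != q i].
Proof.
move=> hs.
have hs' : forall s : seq nat, exists pa : nat * A * nat,
    [/\ prime pa.1.1, pa.1.1 \notin s, pa.1.2 *+ pa.1.1 ^ pa.2 = 0 & Bad pa.1.1 pa.1.2].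
  move=> s; case: (hs s) => p [a [pp ps [k hk] hb]]; by exists (p, a, k).
pose F := fun s => projT1 (constructive_indefinite_description _ (hs' s)).
have hF : forall s, [/\ prime (F s).1.1, (F s).1.1 \notin s,
    (F s).1.2 *+ (F s).1.1 ^ (F s).2 = 0 & Bad (F s).1.1 (F s).1.2].
  by move=> s; rewrite /F; case: (constructive_indefinite_description _ _).
pose G := fun s => (F s).1.1.
exists (fun i => G (pre G i)), (fun i => (F (pre G i)).1.2), (fun i => (F (pre G i)).2).
move=> i; case: (hF (pre G i)) => h1 h2 h3 h4; split => // l li.
apply: contraNneq h2 => e; rewrite /G in e; rewrite -e [pre G i]pre_map.
by apply/mapP; exists l; rewrite // mem_iota.
Qed.

Fixpoint Ysub (A : zmodType) (a : nat -> A) (n : nat) : A -> Prop :=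
  if n is m.+1 then fun x => exists k : int, Ysub a m (x - a m *~ k) else fun x => x = 0.

Lemma Ysub_mono (A : zmodType) (a : nat -> A) n m x : (n <= m)%N -> Ysub a n x -> Ysub a m x.
Proof.
move=> nm; elim: m nm => [|m IH]; first by rewrite leqn0 => /eqP ->.
rewrite leq_eqVlt => /orP [/eqP <- //|lt] hx.
by exists 0; rewrite mulr0z subr0; apply: IH.
Qed.

Lemma Ysub_sub (A : zmodType) (a : nat -> A) n : is_subgroup (Ysub a n).
Proof.
elim: n => [|n IH]; first by split => //= x y -> ->; rewrite subr0.
split; first by exists 0; rewrite mulr0z subr0; apply: sub0 IH.
move=> x y [k1 h1] [k2 h2]; exists (k1 - k2).
have -> : x - y - a n *~ (k1 - k2) = (x - a n *~ k1) - (y - a n *~ k2).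
  by rewrite mulrzBr !opprB addrACA [RHS]addrACA; congr (_ + _); exact: addrC.
exact: subB.
Qed.

Definition Xg (A : zmodType) (a : nat -> A) : A -> Prop := fun x => exists n, Ysub a n x.

Lemma Xg_sub (A : zmodType) (a : nat -> A) : is_subgroup (Xg a).
Proof.
split; first by exists 0%N.
move=> x y [n1 h1] [n2 h2]; exists (maxn n1 n2); apply: subB; first exact: Ysub_sub.
  by apply: Ysub_mono h1; exact: leq_maxl.
by apply: Ysub_mono h2; exact: leq_maxr.
Qed.

Lemma Xg_a (A : zmodType) (a : nat -> A) i : Xg a (a i).
Proof.
exists i.+1; exists 1; rewrite mulr1z subrr.
exact: (sub0 (Ysub_sub a i)).
Qed.

Definition Mp (q r : nat -> nat) (n i : nat) : nat :=
  \prod_(0 <= l < n) (if l != i then q l ^ r l else 1)%N.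

Lemma Mp_rec q r n i : Mp q r n.+1 i = (Mp q r n i * (if n != i then q n ^ r n else 1))%N.
Proof. by rewrite /Mp big_nat_recr. Qed.

Lemma Mp_dvd q r n i j : (j < n)%N -> j != i -> (q j ^ r j %| Mp q r n i)%N.
Proof.
elim: n => // n IH; rewrite ltnS leq_eqVlt => /orP [/eqP ->|lt] ji; rewrite Mp_rec.
  by rewrite ji dvdn_mull.
by rewrite dvdn_mulr // IH.
Qed.

Lemma Mp_coprime q r n i : prime (q i) -> (forall l, l != i -> q l != q i) ->
  (forall l, prime (q l)) -> coprime (Mp q r n i) (q i).
Proof.
move=> pi hd hp; elim: n => [|n IH]; first by rewrite /Mp big_geq // coprime1n.
rewrite Mp_rec coprimeMl IH /=; case: ifP => ni; last exact: coprime1n.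
apply: coprimeXl; rewrite prime_coprime // dvdn_prime2 //; exact: hd.
Qed.

Lemma killMz (A : zmodType) (x : A) N z : x *+ N = 0 -> (x *~ z) *+ N = 0.
Proof. by move=> hx; rewrite pmulrn -mulrzA mulrC mulrzA -pmulrn hx mul0rz. Qed.

Lemma proj (A : zmodType) (a : nat -> A) (q r : nat -> nat) :
  (forall i, a i *+ q i ^ r i = 0) ->
  forall n i y, Ysub a n y -> exists k : int, y *+ Mp q r n i = a i *~ k.
Proof.
move=> har; elim=> [|n IH] i y /=; first by move=> ->; exists 0; rewrite mul0rn mulr0z.
case=> k0 /(IH i) [k hk]; rewrite Mp_rec.
have ey : y = (y - a n *~ k0) + a n *~ k0 by rewrite subrK.
case: ifP => ni.
  have hB : (a n *~ k0) *+ (Mp q r n i * q n ^ r n) = 0.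
    by rewrite mulnC mulrnA killMz // mul0rn.
  exists (k * (q n ^ r n)%N%:Z); rewrite ey mulrnDl hB addr0 mulrnA hk.
  by rewrite pmulrn -mulrzA.
move/negbFE: ni => /eqP ni; subst i.
exists (k + k0 * (Mp q r n n)%:Z); rewrite muln1 ey mulrnDl hk mulrzDr.
by rewrite pmulrn -mulrzA.
Qed.

Lemma pigeon (A : zmodType) (H : A -> Prop) (z : nat -> A) (s0 : seq A) :
  is_subgroup H -> (forall i, exists2 y, y \in s0 & H (z i - y)) ->
  exists i j, i != j /\ H (z i - z j).
Proof.
move=> hH hz.
have hz' : forall i, exists y, y \in s0 /\ H (z i - y).
  by move=> i; case: (hz i) => y h1 h2; exists y.
pose Y := fun i => projT1 (constructive_indefinite_description _ (hz' i)).
have hY : forall i, Y i \in s0 /\ H (z i - Y i).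
  by move=> i; rewrite /Y; case: (constructive_indefinite_description _ _).
pose g := fun i : 'I_(size s0).+1 => Ordinal (introT idP (etrans (index_mem (Y i) s0) (hY i).1)).
have : ~ injective g.
  move=> ig; have := @leq_card _ _ g ig; by rewrite !card_ord ltnn.
move=> ni.
case: (classic (exists i j, g i = g j /\ i != j)) => [[i [j [eg nij]]]|nex].
  have eY : Y i = Y j.
    have := congr1 (@nat_of_ord _) eg => /= ei.
    by rewrite -(nth_index 0 (hY i).1) ei nth_index //; exact: (hY j).1.
  exists (nat_of_ord i), (nat_of_ord j); split => //.
  have -> : z i - z j = (z i - Y i) - (z j - Y j) by rewrite eY opprB addrA subrK.
  by apply: subB => //; [exact: (hY i).2 | exact: (hY j).2].
exfalso; apply: ni => i j eg; case: (eqVneq i j) => // nij.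
by exfalso; apply: nex; exists i, j.
Qed.

Lemma killdvd (A : zmodType) (x : A) d M : x *+ d = 0 -> (d %| M)%N -> x *+ M = 0.
Proof. by move=> hx /dvdnP [e ->]; rewrite mulnC mulrnA hx mul0rn. Qed.

Lemma not_cof (P : nat -> Prop) : ~ cofinitely_many_primes P ->
  forall s : seq nat, exists p, [/\ prime p, p \notin s & ~ P p].
Proof.
move=> h s; apply: NNPP => hn; apply: h; exists s => p pp ps; apply: NNPP => np.
by apply: hn; exists p; split.
Qed.

Lemma distinct_q (q : nat -> nat) : (forall i l, (l < i)%N -> q l != q i) ->
  forall i l, l != i -> q l != q i.
Proof.
move=> h i l; case: (ltngtP l i) => // [li|il] _; first exact: h.
by rewrite eq_sym; apply: h.
Qed.

Lemma big_n (n i j : nat) : (j < (maxn n (maxn i j)).+1)%N /\ (n <= (maxn n (maxn i j)).+1)%N.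
Proof. split; lia. Qed.

Lemma inertial_fwd (A : zmodType) (phi : {additive A -> A}) :
  inertial phi -> cofinitely_many_primes (fun p => mult_on p phi).
Proof.
move=> hin; apply: NNPP => nc.
have hb : forall s : seq nat, exists p a, [/\ prime p, p \notin s, primary p a &
    (fun p a => forall z : int, phi a <> a *~ z) p a].
  move=> s; case: (not_cof nc s) => p [pp ps nm].
  case: (classic (forall x, primary p x -> exists z : int, phi x = x *~ z)) => h.
    by case: nm; apply: lemL.
  case: (not_all_ex_not _ _ h) => a ha; exists p, a; split => //.
    by apply: NNPP => hp; apply: ha.
  by move=> z e; apply: ha => _; exists z.
case: (seq_bad hb) => q [a [r hqar]].
have hp : forall i, prime (q i) by move=> i; case: (hqar i).
have hr : forall i, a i *+ q i ^ r i = 0 by move=> i; case: (hqar i).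
have hbad : forall i z, phi (a i) <> a i *~ z by move=> i; case: (hqar i).
have hd : forall i l, l != i -> q l != q i.
  by apply: distinct_q => i l; case: (hqar i) => _ _ _; apply.
case: (hin (Xg a) (Xg_sub a) (fun _ _ => I)) => s0 hs0.
have hz : forall i, exists2 y, y \in s0 & Xg a (phi (a i) - y).
  move=> i; case: (hs0 (phi (a i) + 0)).
    exists (phi (a i)), 0; split => //; first by exists (a i) => //; exact: Xg_a.
    exact: (sub0 (Xg_sub a)).
  by move=> y ys hy; exists y; rewrite // addr0 in hy.
case: (pigeon (Xg_sub a) hz) => i [j [nij [n hn]]].
case: (big_n n i j) => jn nn.
set n' := (maxn n (maxn i j)).+1 in jn nn.
have hn' := Ysub_mono nn hn.
case: (proj hr i hn') => k hk.
have hj : phi (a j) *+ Mp q r n' i = 0.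
  apply: (killdvd (d := q j ^ r j)); first by rewrite -raddfMn hr raddf0.
  by apply: Mp_dvd => //; rewrite eq_sym.
rewrite mulrnBl hj subr0 in hk.
have cop : coprime (Mp q r n' i) (q i ^ r i).
  by apply: coprimeXr; apply: Mp_coprime => // l; apply: hd.
case: (coprime_inv (x := phi (a i)) cop); first by rewrite -raddfMn hr raddf0.
move=> u hu; apply: (hbad i (k * u)); by rewrite -hu hk mulrzA.
Qed.

Lemma left_inertial_fwd (A : zmodType) (phi : {additive A -> A}) :
  left_inertial phi -> cofinitely_many_primes (fun p => inv_mult_on p phi).
Proof.
move=> hin; apply: NNPP => nc.
have hb : forall s : seq nat, exists p a, [/\ prime p, p \notin s, primary p a &
    (fun p a => forall z : int, phi (a *~ z) <> a) p a].
  move=> s; case: (not_cof nc s) => p [pp ps nm].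
  case: (classic (forall x, primary p x -> exists z : int, phi (x *~ z) = x)) => h.
    by case: nm; apply: lemLI.
  case: (not_all_ex_not _ _ h) => a ha; exists p, a; split => //.
    by apply: NNPP => hp; apply: ha.
  by move=> z e; apply: ha => _; exists z.
case: (seq_bad hb) => q [a [r hqar]].
have hp : forall i, prime (q i) by move=> i; case: (hqar i).
have hr : forall i, a i *+ q i ^ r i = 0 by move=> i; case: (hqar i).
have hbad : forall i z, phi (a i *~ z) <> a i by move=> i; case: (hqar i).
have hd : forall i l, l != i -> q l != q i.
  by apply: distinct_q => i l; case: (hqar i) => _ _ _; apply.
case: (hin (Xg a) (Xg_sub a) (fun _ _ => I)) => s0 hs0.
have hH := cap_sub (Xg_sub a) (img_sub phi (Xg_sub a)).
have hz : forall i, exists2 y, y \in s0 & capg (Xg a) (img phi (Xg a)) (a i - y).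
  by move=> i; apply: hs0; exact: Xg_a.
case: (pigeon hH hz) => i [j [nij [_ [x [n hn] ex]]]].
case: (big_n n i j) => jn nn.
set n' := (maxn n (maxn i j)).+1 in jn nn.
have hn' := Ysub_mono nn hn.
case: (proj hr i hn') => k hk.
have hj : a j *+ Mp q r n' i = 0.
  apply: (killdvd (d := q j ^ r j)) => //.
  by apply: Mp_dvd => //; rewrite eq_sym.
have e2 : a i *+ Mp q r n' i = phi (a i *~ k).
  by rewrite -hk raddfMn -ex mulrnBl hj subr0.
have cop : coprime (Mp q r n' i) (q i ^ r i).
  by apply: coprimeXr; apply: Mp_coprime => // l; apply: hd.
case: (coprime_inv cop (hr i)) => u hu.
apply: (hbad i (k * u)); by rewrite mulrzA raddfMz -e2.
Qed.

Theorem proposition3p2 (A : zmodType) (hA : periodic A) (phi : {additive A -> A}) :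
  (inertial phi <->
     (forall p, prime p -> inertial_on (primary p) phi) /\
     cofinitely_many_primes (fun p => mult_on p phi)) /\
  (left_inertial phi <->
     (forall p, prime p -> left_inertial_on (primary p) phi) /\
     cofinitely_many_primes (fun p => inv_mult_on p phi)).
Proof.
split; split.
- move=> hin; split; last exact: inertial_fwd.
  by move=> p pp X hX _; apply: hin X hX (fun _ _ => I).
- by case=> h1 h2; apply: inertial_back.
- move=> hin; split; last exact: left_inertial_fwd.
  by move=> p pp X hX _; apply: hin X hX (fun _ _ => I).
- by case=> h1 h2; apply: left_inertial_back.
Qed.
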